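(* Let $K$ be a field and $f\colon R\to S$ a morphism of Zinbiel algebras. If $H^3_{\mathrm{Zinb}}(f,f)=0$, then every $2$-cocycle $\theta_1\in C^2_{\mathrm{Zinb}}(f,f)$ is the infinitesimal of some deformation of $f$.
   Context: A Zinbiel algebra over $K$ is a $K$-vector space $R$ with bilinear product $x\cdot y$ (also written $m_R(x,y)$) satisfying $(x\cdot y)\cdot z=x\cdot(y\cdot z)+x\cdot(z\cdot y)$. A morphism $f\colon R\to S$ is a linear map with $f(x\cdot y)=f(x)\cdot f(y)$. $R$ is a bimodule over itself, $S$ over itself, and $S$ is an $R$-bimodule via $r\cdot s=f(r)\cdot s$, $s\cdot r=s\cdot f(r)$. For a bimodule $A$ over $R$ and $1\le n\le4$, $C^n_{\mathrm{Zinb}}(R,A)=\mathrm{Hom}_K(R^{\otimes n},A)$ with $(d^1\varphi)(x,y)=x\cdot\varphi(y)-\varphi(x\cdot y)+\varphi(x)\cdot y$, $(d^2\varphi)(x,y,z)=x\cdot(\varphi(y,z)+\varphi(z,y))-\varphi(x\cdot y,z)+\varphi(x,y\cdot z+z\cdot y)-\varphi(x,y)\cdot z$, $(d^3\varphi)(x,y,z,w)=x\cdot\{\varphi(y,z,w)-\varphi(z,w,y)+\varphi(z,y,w)-\varphi(w,z,y)\}-\varphi(x\cdot y,z,w)+\varphi(x,y\cdot z+z\cdot y,w)-\varphi(x,y,z\cdot w+w\cdot z)+\varphi(x,y,z)\cdot w$. The deformation complex: $C^0_{\mathrm{Zinb}}(R,S)=0$, $d^0=0$, $C^n_{\mathrm{Zinb}}(f,f)=C^n_{\mathrm{Zinb}}(R,R)\times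 C^n_{\mathrm{Zinb}}(S,S)\times C^{n-1}_{\mathrm{Zinb}}(R,S)$ ($1\le n\le4$), $d^i_f(\xi;\pi;\varphi)=(d^i\xi;d^i\pi;f\xi-\pi f-d^{i-1}\varphi)$ with $(f\xi)(x_1,\dots)=f(\xi(x_1,\dots))$, $(\pi f)(x_1,\dots)=\pi(f(x_1),\dots)$. $H^3_{\mathrm{Zinb}}(f,f)=\ker d^3_f/\operatorname{im}d^2_f$; a $2$-cocycle is an element of $\ker d^2_f$. A deformation of $f$ is a formal power series $\Theta_t=\sum_{i\ge0}\theta_it^i$ with $\theta_0=(m_R;m_S;f)$ and $\theta_i=(m_{R,i};m_{S,i};f_i)\in C^2_{\mathrm{Zinb}}(f,f)$, such that for $*=R,S$ the bilinear map $M_{*,t}=\sum_i m_{*,i}t^i$ satisfies $M_{*,t}(M_{*,t}(x,y),z)=M_{*,t}(x,M_{*,t}(y,z))+M_{*,t}(x,M_{*,t}(z,y))$ for $x,y,z\in *$, and $F_t=\sum_if_it^i$ satisfies $F_t(M_{R,t}(x,y))=M_{S,t}(F_t(x),F_t(y))$ for $x,y\in R$. Its infinitesimal is $\theta_1$. *)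

(* Defs.v *)
From HB Require Import structures.
From mathcomp Require Import all_boot all_order all_algebra.
Set Implicit Arguments. Unset Strict Implicit. Unset Printing Implicit Defensive.
Import GRing.Theory.
Local Open Scope ring_scope.

Section ZinbielDefs.
Variable K : fieldType.

(** K-linear and K-multilinear maps (= elements of Hom_K(U^{(x)n}, V)). *)
Definition lin (U V : lmodType K) (g : U -> V) : Prop :=
  forall (a : K) (u v : U), g (a *: u + v) = a *: g u + g v.

Definition ml2 (U V : lmodType K) (g : U -> U -> V) : Prop :=
  (forall x, lin (g x)) /\ (forall y, lin (fun x => g x y)).

Definition ml3 (U V : lmodType K) (g : U -> U -> U -> V) : Prop :=
  (forall y z, lin (fun x => g x y z)) /\ (forall x z, lin (fun y => g x y z)) /\
  (forall x y, lin (g x y)).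

Definition zinbiel (U : lmodType K) (m : U -> U -> U) : Prop :=
  ml2 m /\ forall x y z, m (m x y) z = m x (m y z) + m x (m z y).

Definition zinb_morph (R S : lmodType K) (mR : R -> R -> R) (mS : S -> S -> S)
  (f : R -> S) : Prop :=
  lin f /\ forall x y, f (mR x y) = mS (f x) (f y).

(** Coboundaries d^1, d^2, d^3 of C^*_Zinb(R, A), for a bimodule A over R given
    by the left action [l] and right action [r]; [m] is the product of R. *)
Section Cob.
Variables (R A : lmodType K) (m : R -> R -> R) (l : R -> A -> A) (r : A -> R -> A).

Definition d1 (phi : R -> A) : R -> R -> A :=
  fun x y => l x (phi y) - phi (m x y) + r (phi x) y.

Definition d2 (phi : R -> R -> A) : R -> R -> R -> A :=
  fun x y z => l x (phi y z + phi z y) - phi (m x y) z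
               + phi x (m y z + m z y) - r (phi x y) z.

Definition d3 (phi : R -> R -> R -> A) : R -> R -> R -> R -> A :=
  fun x y z w =>
    l x (phi y z w - phi z w y + phi z y w - phi w z y)
    - phi (m x y) z w + phi x (m y z + m z y) w
    - phi x y (m z w + m w z) + r (phi x y z) w.
End Cob.

Section Deformation.
Variables (R S : lmodType K) (mR : R -> R -> R) (mS : S -> S -> S) (f : R -> S).

(** S as an R-bimodule via f. *)
Definition lf (x : R) (s : S) : S := mS (f x) s.
Definition rf (s : S) (x : R) : S := mS s (f x).

(** H^3_Zinb(f,f) = 0 : every element of ker d^3_f (in C^3(f,f)) lies in im d^2_f. *)
Definition H3_zero : Prop :=
  forall (xi : R -> R -> R -> R) (pi : S -> S -> S -> S) (phi : R -> R -> S),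
    ml3 xi -> ml3 pi -> ml2 phi ->
    (forall x y z w, d3 mR mR mR xi x y z w = 0) ->
    (forall x y z w, d3 mS mS mS pi x y z w = 0) ->
    (forall x y z, f (xi x y z) - pi (f x) (f y) (f z)
                     - d2 mR lf rf phi x y z = 0) ->
    exists (xi2 : R -> R -> R) (pi2 : S -> S -> S) (phi1 : R -> S),
      ml2 xi2 /\ ml2 pi2 /\ lin phi1 /\
      (forall x y z, d2 mR mR mR xi2 x y z = xi x y z) /\
      (forall x y z, d2 mS mS mS pi2 x y z = pi x y z) /\
      (forall x y, f (xi2 x y) - pi2 (f x) (f y) - d1 mR lf rf phi1 x y = phi x y).

(** 2-cocycles of the deformation complex: elements of ker d^2_f. *)
Definition cocycle2 (m1R : R -> R -> R) (m1S : S -> S -> S) (f1 : R -> S) : Prop :=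
  ml2 m1R /\ ml2 m1S /\ lin f1 /\
  (forall x y z, d2 mR mR mR m1R x y z = 0) /\
  (forall x y z, d2 mS mS mS m1S x y z = 0) /\
  (forall x y, f (m1R x y) - m1S (f x) (f y) - d1 mR lf rf f1 x y = 0).

(** Formal deformation Theta_t = sum_i theta_i t^i, theta_i = (MR i; MS i; F i),
    with the power-series identities written coefficientwise (coefficient of t^n). *)
Definition deformation (MR : nat -> R -> R -> R) (MS : nat -> S -> S -> S)
  (F : nat -> R -> S) : Prop :=
  MR 0%N = mR /\ MS 0%N = mS /\ F 0%N = f /\
      (forall i, ml2 (MR i) /\ ml2 (MS i) /\ lin (F i)) /\
      (forall n x y z,
        \sum_(i < n.+1) MR i (MR (n - i)%N x y) z
        = \sum_(i < n.+1) (MR i x (MR (n - i)%N y z) + MR i x (MR (n - i)%N z y))) /\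
      (forall n x y z,
        \sum_(i < n.+1) MS i (MS (n - i)%N x y) z
        = \sum_(i < n.+1) (MS i x (MS (n - i)%N y z) + MS i x (MS (n - i)%N z y))) /\
      (forall n x y,
        \sum_(i < n.+1) F i (MR (n - i)%N x y)
        = \sum_(i < n.+1) \sum_(j < (n - i).+1)
             MS i (F j x) (F (n - i - j)%N y)).

End Deformation.
End ZinbielDefs.

(* Main.v *)
Require Import Defs.
From HB Require Import structures.
From mathcomp Require Import all_boot all_algebra.
From mathcomp Require Import zify.
From Stdlib Require Import ClassicalEpsilon.
Set Implicit Arguments. Unset Strict Implicit. Unset Printing Implicit Defensive.
Import GRing.Theory.
Local Open Scope ring_scope.

Inductive zex := ZAt of nat | ZPl of zex & zex | ZNg of zex | ZZe.

Fixpoint zev (V : zmodType) (env : seq V) (e : zex) : V :=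
  match e with
  | ZAt n => nth 0 env n
  | ZPl a b => zev env a + zev env b
  | ZNg a => - zev env a
  | ZZe => 0
  end.

Fixpoint zcf (e : zex) (n : nat) : int :=
  match e with
  | ZAt m => if m == n then 1 else 0
  | ZPl a b => zcf a n + zcf b n
  | ZNg a => - zcf a n
  | ZZe => 0
  end.

Lemma zev_sum (V : zmodType) (env : seq V) e :
  zev env e = \sum_(n < size env) (nth 0 env n) *~ zcf e n.
Proof.
elim: e => [m|a iha b ihb|a iha|] /=.
- case: (ltnP m (size env)) => hm.
    rewrite (bigD1 (Ordinal hm)) //= eqxx big1 ?addr0 //.
    by move=> i /negPf; rewrite -val_eqE /= eq_sym => ->.
  rewrite nth_default // big1 // => i _.
  by case: eqP => // e; move: (ltn_ord i); rewrite -e ltnNge hm.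
- by rewrite iha ihb -big_split /=; apply: eq_bigr => i _; rewrite mulrzDr.
- by rewrite iha -sumrN; apply: eq_bigr => i _; rewrite mulrNz.
- by rewrite big1 // => i _; rewrite mulr0z.
Qed.

Lemma zev0 (V : zmodType) (env : seq V) e :
  all (fun n => zcf e n == 0) (iota 0 (size env)) -> zev env e = 0.
Proof.
move=> /allP h; rewrite zev_sum big1 // => i _.
by rewrite (eqP (h i _)) ?mulr0z // mem_iota /=.
Qed.

Ltac zmem t l :=
  match l with
  | nil => constr:(false)
  | cons ?h _ => let _ := match goal with _ => unify t h end in constr:(true)
  | cons _ ?r => zmem t r
  end.

Ltac zidx t l :=
  match l with
  | cons ?h _ => let _ := match goal with _ => unify t h end in constr:(0%N)
  | cons _ ?r => let n := zidx t r in constr:(n.+1)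
  end.

Ltac zcollect e l :=
  lazymatch e with
  | GRing.add ?a ?b => let l1 := zcollect a l in zcollect b l1
  | GRing.opp ?a => zcollect a l
  | GRing.zero => l
  | _ => let b := zmem e l in
         lazymatch b with true => l | false => constr:(cons e l) end
  end.

Ltac zreify e l :=
  lazymatch e with
  | GRing.add ?a ?b => let ra := zreify a l in let rb := zreify b l in constr:(ZPl ra rb)
  | GRing.opp ?a => let ra := zreify a l in constr:(ZNg ra)
  | GRing.zero => constr:(ZZe)
  | _ => let n := zidx e l in constr:(ZAt n)
  end.

Ltac zsolve0 :=
  lazymatch goal with
  | |- @eq ?V ?e 0 =>
    let l := zcollect e (@nil V) in
    let r := zreify e l in
    change (zev l r = 0); apply: zev0; vm_compute; reflexivity
  end.

Ltac zsolve := apply/eqP; rewrite -subr_eq0; apply/eqP; zsolve0.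


Definition Zf (T : zmodType) (mu nu : T -> T -> T) (x y z : T) := mu (nu x y) z - mu x (nu y z) - mu x (nu z y).

Section Free.
Variables (V W : zmodType) (m : V -> V -> V) (n : W -> W -> W) (F : V -> W).
Hypothesis mDl : forall x y z, m (x + y) z = m x z + m y z.
Hypothesis mDr : forall x y z, m x (y + z) = m x y + m x z.
Hypothesis nDl : forall x y z, n (x + y) z = n x z + n y z.
Hypothesis nDr : forall x y z, n x (y + z) = n x y + n x z.
Hypothesis FD : forall x y, F (x + y) = F x + F y.

Lemma add_neg (U X : zmodType) (g : U -> X) : (forall x y, g (x + y) = g x + g y) ->
  forall x, g (- x) = - g x.
Proof.
move=> h x; have h0 : g 0 = 0 by apply: (@addrI _ (g 0)); rewrite -h !addr0.
by apply: (@addrI _ (g x)); rewrite -h !subrr.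
Qed.

Lemma mNl x y : m (- x) y = - m x y.
Proof. exact: (@add_neg _ _ (fun x => m x y)). Qed.
Lemma mNr x y : m x (- y) = - m x y.
Proof. exact: (@add_neg _ _ (m x)). Qed.
Lemma nNl x y : n (- x) y = - n x y.
Proof. exact: (@add_neg _ _ (fun x => n x y)). Qed.
Lemma nNr x y : n x (- y) = - n x y.
Proof. exact: (@add_neg _ _ (n x)). Qed.
Lemma FN x : F (- x) = - F x.
Proof. exact: add_neg. Qed.

Definition D3f (phi : V -> V -> V -> V) x y z w :=
  m x (phi y z w - phi z w y + phi z y w - phi w z y) - phi (m x y) z w
  + phi x (m y z + m z y) w - phi x y (m z w + m w z) + m (phi x y z) w.

Lemma D3Z x y z w : D3f (Zf m m) x y z w = 0.
Proof.
rewrite /D3f /Zf.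
repeat (rewrite mDl || rewrite mDr || rewrite mNl || rewrite mNr).
zsolve0.
Qed.

Definition Ef x y := F (m x y) - n (F x) (F y).
Definition D2f (phi : V -> V -> W) x y z :=
  n (F x) (phi y z + phi z y) - phi (m x y) z + phi x (m y z + m z y) - n (phi x y) (F z).

Lemma D2E x y z : F (Zf m m x y z) - Zf n n (F x) (F y) (F z) + D2f Ef x y z = 0.
Proof.
rewrite /D2f /Ef /Zf.
repeat (rewrite mDl || rewrite mDr || rewrite mNl || rewrite mNr || rewrite FD || rewrite FN || rewrite nDl || rewrite nDr || rewrite nNl || rewrite nNr).
zsolve0.
Qed.
End Free.

Lemma addf0 (U X : zmodType) (g : U -> X) : (forall x y, g (x + y) = g x + g y) -> g 0 = 0.
Proof. by move=> h; apply: (@addrI _ (g 0)); rewrite -h !addr0. Qed.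

Lemma if_add (T : zmodType) (c : bool) (a b : T) :
  (if c then a + b else 0) = (if c then a else 0) + (if c then b else 0).
Proof. by case: c; rewrite ?addr0. Qed.
Lemma if_opp (T : zmodType) (c : bool) (a : T) :
  (if c then - a else 0) = - (if c then a else 0).
Proof. by case: c; rewrite ?oppr0. Qed.
Lemma if_sum (T : zmodType) (c : bool) n (G : 'I_n -> T) :
  (if c then \sum_(i < n) G i else 0) = \sum_(i < n) (if c then G i else 0).
Proof. by case: c; rewrite // big1. Qed.

Lemma sum_eqc (T : zmodType) n (X : 'I_n.+1 -> T) (c : nat) :
  \sum_(j < n.+1) (if (j == c :> nat) then X j else 0) = if (c < n.+1)%N then X (inord c) else 0.
Proof.
case: ltnP => hc.
  rewrite (bigD1 (inord c)) //= inordK // eqxx big1 ?addr0 // => j hj.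
  case: eqP => // e; move: hj; rewrite -e inord_val eqxx //.
rewrite big1 // => j _; case: eqP => // e; move: (ltn_ord j); lia.
Qed.

Lemma sum_eqcc (T : zmodType) n (X : T) (c : nat) :
  \sum_(j < n.+1) (if (j == c :> nat) then X else 0) = if (c < n.+1)%N then X else 0.
Proof. exact: (@sum_eqc T n (fun _ => X) c). Qed.

Lemma inord0' n : (inord 0 : 'I_n.+1) = ord0.
Proof. by apply: val_inj; rewrite /= inordK. Qed.
Lemma inordmax n : (inord n : 'I_n.+1) = ord_max.
Proof. by apply: val_inj; rewrite /= inordK. Qed.

Lemma ffD (aT : finType) (T : zmodType) (f g : {ffun aT -> T}) x : (f + g) x = f x + g x.
Proof. by rewrite ffunE. Qed.
Lemma ffN (aT : finType) (T : zmodType) (f : {ffun aT -> T}) x : (- f) x = - f x.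
Proof. by rewrite ffunE. Qed.
Lemma ffB (aT : finType) (T : zmodType) (f g : {ffun aT -> T}) x : (f - g) x = f x - g x.
Proof. by rewrite !ffunE. Qed.

Lemma conv2 (T : zmodType) n p (G : nat -> nat -> T) : (p < n.+1)%N ->
  \sum_(a < n.+1) \sum_(i < n.+1) (if (i + a == p)%N then G i a else 0)
  = \sum_(i < p.+1) G i (p - i)%N.
Proof.
move=> hp; rewrite exchange_big /=.
rewrite (big_ord_widen n.+1 (fun i => G i (p - i)%N) hp) [RHS]big_mkcond /=.
apply: eq_bigr => i _.
transitivity (\sum_(a < n.+1) (if (a == (p - i)%N :> nat) then
    (if (i < p.+1)%N then G i (p - i)%N else 0) else 0)).
  apply: eq_bigr => a _; have [e|ne] := eqVneq (a : nat) (p - i)%N.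
    rewrite e; case: ifP => h; case: ifP => h' //; exfalso; move: h h' => /eqP h /negP h'; apply h'; lia.
  case: ifP => // /eqP h; exfalso; move/eqP: ne; apply; lia.
rewrite sum_eqcc; case: ifP => // h; exfalso; move/negP: h; apply; lia.
Qed.

Lemma conv3 (T : zmodType) n p (G : nat -> nat -> nat -> T) : (p < n.+1)%N ->
  \sum_(a < n.+1) \sum_(c < n.+1) \sum_(i < n.+1) (if (i + a + c == p)%N then G i a c else 0)
  = \sum_(i < p.+1) \sum_(j < (p - i).+1) G i j (p - i - j)%N.
Proof.
move=> hp.
under eq_bigr => a _ do rewrite exchange_big /=.
rewrite exchange_big /=.
rewrite (big_ord_widen n.+1 (fun i => \sum_(j < (p - i).+1) G i j (p - i - j)%N) hp) [RHS]big_mkcond /=.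
apply: eq_bigr => i _.
case: ifP => hi.
  have hpi : ((p - i) < n.+1)%N by lia.
  rewrite (big_ord_widen n.+1 (fun j => G i j (p - i - j)%N) hpi) [RHS]big_mkcond /=.
  apply: eq_bigr => a _.
  transitivity (\sum_(c < n.+1) (if (c == (p - i - a)%N :> nat) then
    (if (a < (p - i).+1)%N then G i a (p - i - a)%N else 0) else 0)).
    apply: eq_bigr => c _; have [e|ne] := eqVneq (c : nat) (p - i - a)%N.
      rewrite e; case: ifP => h; case: ifP => h' //; exfalso; move: h h' => /eqP h /negP h'; apply h'; lia.
    case: ifP => // /eqP h; exfalso; move/eqP: ne; apply; lia.
  rewrite sum_eqcc; case: ifP => // h; exfalso; move/negP: h; apply; lia.
rewrite big1 // => a _; rewrite big1 // => c _; case: ifP => // /eqP h; exfalso; move/negP: hi; apply; lia.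
Qed.

Section MT.
Variables (N : nat) (T : zmodType) (Mx : nat -> T -> T -> T).
Hypothesis hDl : forall i x y z, Mx i (x + y) z = Mx i x z + Mx i y z.
Hypothesis hDr : forall i x y z, Mx i x (y + z) = Mx i x y + Mx i x z.

Lemma M0l i y : Mx i 0 y = 0. Proof. exact: (@addf0 _ _ (fun x => Mx i x y)). Qed.
Lemma M0r i x : Mx i x 0 = 0. Proof. exact: (@addf0 _ _ (Mx i x)). Qed.

Local Notation ser := {ffun 'I_N.+2 -> T}.

Lemma ord0val n : ((ord0 : 'I_n.+1) : nat) = 0%N. Proof. by []. Qed.
Lemma ordmaxval n : ((ord_max : 'I_n.+1) : nat) = n. Proof. by []. Qed.

Definition dn (n : nat) (x : T) : ser := [ffun j : 'I_N.+2 => if (j == n :> nat) then x else 0].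

Definition mt (U X : ser) : ser :=
  [ffun k : 'I_N.+2 => \sum_(i < N.+2) \sum_(j < N.+2) \sum_(l < N.+2)
      (if (i + j + l == k)%N then Mx i (U j) (X l) else 0)].

Lemma dnE n x k : dn n x k = if (k == n :> nat) then x else 0.
Proof. by rewrite ffunE. Qed.

Lemma mt_Dl U1 U2 X : mt (U1 + U2) X = mt U1 X + mt U2 X.
Proof.
apply/ffunP => k; rewrite !ffunE -big_split; apply: eq_bigr => i _.
rewrite -big_split; apply: eq_bigr => j _; rewrite -big_split; apply: eq_bigr => l _.
by rewrite ffunE hDl if_add.
Qed.
Lemma mt_Dr U X1 X2 : mt U (X1 + X2) = mt U X1 + mt U X2.
Proof.
apply/ffunP => k; rewrite !ffunE -big_split; apply: eq_bigr => i _.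
rewrite -big_split; apply: eq_bigr => j _; rewrite -big_split; apply: eq_bigr => l _.
by rewrite ffunE hDr if_add.
Qed.
Lemma mt_0l X : mt 0 X = 0. Proof. exact: (@addf0 _ _ (fun U => mt U X)) (fun a b => mt_Dl a b X). Qed.
Lemma mt_0r U : mt U 0 = 0. Proof. exact: (@addf0 _ _ (mt U)) (mt_Dr U). Qed.

Lemma mt_suml I r P (G : I -> ser) X :
  mt (\sum_(i <- r | P i) G i) X = \sum_(i <- r | P i) mt (G i) X.
Proof. exact: (big_morph (fun U => mt U X) (fun a b => mt_Dl a b X) (mt_0l X)). Qed.
Lemma mt_sumr I r P (G : I -> ser) U :
  mt U (\sum_(i <- r | P i) G i) = \sum_(i <- r | P i) mt U (G i).
Proof. exact: (big_morph (mt U) (mt_Dr U) (mt_0r U)). Qed.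

Lemma decomp (U : ser) : U = \sum_(b < N.+2) dn b (U b).
Proof.
apply/ffunP => k; rewrite sum_ffunE.
under eq_bigr => b _ do rewrite dnE.
rewrite (bigD1 k) //= eqxx big1 ?addr0 // => b hb.
case: eqP => // e; move: hb; rewrite (val_inj e) eqxx //.
Qed.

Lemma mt_dd b c u v : mt (dn b u) (dn c v) = \sum_(a < N.+2) dn (a + b + c) (Mx a u v).
Proof.
apply/ffunP => k; rewrite ffunE sum_ffunE; apply: eq_bigr => i _.
rewrite dnE.
transitivity (\sum_(j < N.+2) (if (j == b :> nat) then \sum_(l < N.+2) (if (l == c :> nat)
   then (if (i + b + c == k)%N then Mx i u v else 0) else 0) else 0)).
  apply: eq_bigr => j _; rewrite if_sum; apply: eq_bigr => l _; rewrite !dnE.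
  case: (eqVneq (j : nat) b) => [Hj|Hj]; case: (eqVneq (l : nat) c) => [Hl|Hl];
    (try (rewrite Hj Hl //)); rewrite ?M0l ?M0r ?if_same //.
rewrite !sum_eqcc.
repeat (case: ifP => ?); try done; exfalso; move: (ltn_ord k); lia.
Qed.

Lemma mt_at0 U X : mt U X ord0 = Mx 0 (U ord0) (X ord0).
Proof.
rewrite ffunE.
transitivity (\sum_(i < N.+2) (if (i == 0 :> nat) then \sum_(j < N.+2) (if (j == 0 :> nat) then
   \sum_(l < N.+2) (if (l == 0 :> nat) then Mx i (U j) (X l) else 0) else 0) else 0)).
  apply: eq_bigr => i _; rewrite if_sum; apply: eq_bigr => j _; rewrite !if_sum;
  apply: eq_bigr => l _.
  case: (eqVneq (i : nat) 0) => [Hi|Hi]; case: (eqVneq (j : nat) 0) => [Hj|Hj];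
   case: (eqVneq (l : nat) 0) => [Hl|Hl]; repeat (case: ifP => ?); try done; exfalso; move: (ord0val N.+1) (ordmaxval N.+1); lia.

have h1 : (0 < N.+2)%N by [].
by rewrite !sum_eqc h1 inord0'.
Qed.

Definition lowv (X : ser) := forall k : 'I_N.+2, (k <= N)%N -> X k = 0.

Lemma mt_top_r U X : lowv X -> mt U X ord_max = Mx 0 (U ord0) (X ord_max).
Proof.
move=> hX; rewrite ffunE.
transitivity (\sum_(i < N.+2) (if (i == 0 :> nat) then \sum_(j < N.+2) (if (j == 0 :> nat) then
   \sum_(l < N.+2) (if (l == N.+1 :> nat) then Mx i (U j) (X l) else 0) else 0) else 0)).
  apply: eq_bigr => i _; rewrite if_sum; apply: eq_bigr => j _; rewrite !if_sum;
  apply: eq_bigr => l _.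
  have [el|nl] := eqVneq (l : nat) N.+1.
    case: (eqVneq (i : nat) 0) => [Hi|Hi]; case: (eqVneq (j : nat) 0) => [Hj|Hj];
     repeat (case: ifP => ?); try done; exfalso; move: (ord0val N.+1) (ordmaxval N.+1); lia.
  rewrite hX ?M0r ?if_same //; move: (ltn_ord l) nl => ? /eqP ?; lia.
have h1 : (0 < N.+2)%N by []. have h2 : (N.+1 < N.+2)%N by [].
by rewrite !sum_eqc h1 h2 inord0' inordmax.
Qed.

Lemma mt_top_l U X : lowv X -> mt X U ord_max = Mx 0 (X ord_max) (U ord0).
Proof.
move=> hX; rewrite ffunE.
transitivity (\sum_(i < N.+2) (if (i == 0 :> nat) then \sum_(j < N.+2) (if (j == N.+1 :> nat) then
   \sum_(l < N.+2) (if (l == 0 :> nat) then Mx i (X j) (U l) else 0) else 0) else 0)).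
  apply: eq_bigr => i _; rewrite if_sum; apply: eq_bigr => j _; rewrite !if_sum;
  apply: eq_bigr => l _.
  have [ej|nj] := eqVneq (j : nat) N.+1.
    case: (eqVneq (i : nat) 0) => [Hi|Hi]; case: (eqVneq (l : nat) 0) => [Hl|Hl];
     repeat (case: ifP => ?); try done; exfalso; move: (ord0val N.+1) (ordmaxval N.+1); lia.
  rewrite hX ?M0l ?if_same //; move: (ltn_ord j) nj => ? /eqP ?; lia.
have h1 : (0 < N.+2)%N by []. have h2 : (N.+1 < N.+2)%N by [].
by rewrite !sum_eqc h1 h2 inord0' inordmax.
Qed.

Definition Zt (U X Y : ser) : ser := Zf mt mt U X Y.

Lemma Zt_D1 U1 U2 X Y : Zt (U1 + U2) X Y = Zt U1 X Y + Zt U2 X Y.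
Proof. rewrite /Zt /Zf; repeat (rewrite mt_Dl || rewrite mt_Dr); zsolve. Qed.
Lemma Zt_D2 U X1 X2 Y : Zt U (X1 + X2) Y = Zt U X1 Y + Zt U X2 Y.
Proof. rewrite /Zt /Zf; repeat (rewrite mt_Dl || rewrite mt_Dr); zsolve. Qed.
Lemma Zt_D3 U X Y1 Y2 : Zt U X (Y1 + Y2) = Zt U X Y1 + Zt U X Y2.
Proof. rewrite /Zt /Zf; repeat (rewrite mt_Dl || rewrite mt_Dr); zsolve. Qed.

Lemma Zt_sum1 I r P (G : I -> ser) X Y :
  Zt (\sum_(i <- r | P i) G i) X Y = \sum_(i <- r | P i) Zt (G i) X Y.
Proof.
exact: (big_morph (fun U => Zt U X Y) (fun a b => Zt_D1 a b X Y)
   (@addf0 _ _ (fun U => Zt U X Y) (fun a b => Zt_D1 a b X Y))).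
Qed.
Lemma Zt_sum2 I r P (G : I -> ser) U Y :
  Zt U (\sum_(i <- r | P i) G i) Y = \sum_(i <- r | P i) Zt U (G i) Y.
Proof.
exact: (big_morph (fun X => Zt U X Y) (fun a b => Zt_D2 U a b Y)
   (@addf0 _ _ (fun X => Zt U X Y) (fun a b => Zt_D2 U a b Y))).
Qed.
Lemma Zt_sum3 I r P (G : I -> ser) U X :
  Zt U X (\sum_(i <- r | P i) G i) = \sum_(i <- r | P i) Zt U X (G i).
Proof.
exact: (big_morph (fun Y => Zt U X Y) (fun a b => Zt_D3 U X a b)
   (@addf0 _ _ (fun Y => Zt U X Y) (fun a b => Zt_D3 U X a b))).
Qed.

Definition AI p u v w := \sum_(a < N.+2) \sum_(i < N.+2)
   (if (i + a == p)%N then Zf (Mx i) (Mx a) u v w else 0).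

Lemma Zt_dd_k b c l u v w (k : 'I_N.+2) :
  Zt (dn b u) (dn c v) (dn l w) k =
  if (b + c + l <= k)%N then AI (k - (b + c + l))%N u v w else 0.
Proof.
rewrite /Zt /Zf !mt_dd mt_suml mt_sumr mt_sumr.
under eq_bigr => a _ do rewrite mt_dd.
under [X in _ - X - _]eq_bigr => a _ do rewrite mt_dd.
under [X in _ - _ - X]eq_bigr => a _ do rewrite mt_dd.
rewrite !ffB !sum_ffunE.
under eq_bigr => a _ do rewrite sum_ffunE.
under [X in _ - X - _]eq_bigr => a _ do rewrite sum_ffunE.
under [X in _ - _ - X]eq_bigr => a _ do rewrite sum_ffunE.
rewrite /AI; case: ifP => hs.
  rewrite -!sumrB; apply: eq_bigr => a _; rewrite -!sumrB; apply: eq_bigr => i _.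
  rewrite !dnE.
  have e1 : (nat_of_ord k == (i + (a + b + c) + l)%N) = (i + a == k - (b + c + l))%N.
    by apply/idP/idP => /eqP h; apply/eqP; lia.
  have e2 : (nat_of_ord k == (i + b + (a + c + l))%N) = (i + a == k - (b + c + l))%N.
    by apply/idP/idP => /eqP h; apply/eqP; lia.
  have e3 : (nat_of_ord k == (i + b + (a + l + c))%N) = (i + a == k - (b + c + l))%N.
    by apply/idP/idP => /eqP h; apply/eqP; lia.
  rewrite e1 e2 e3 /Zf; case: ifP => _; rewrite ?subr0 //.
rewrite !big1 ?subr0 // => a _; rewrite big1 // => i _; rewrite dnE;
  case: ifP => // /eqP h; exfalso; move/negP: hs; apply; lia.
Qed.

Lemma Zt_expand U X Y k :
  Zt U X Y k = \sum_(b < N.+2) \sum_(c < N.+2) \sum_(l < N.+2)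
     Zt (dn b (U b)) (dn c (X c)) (dn l (Y l)) k.
Proof.
rewrite {1}(decomp U) {1}(decomp X) {1}(decomp Y) Zt_sum1 sum_ffunE.
apply: eq_bigr => b _; rewrite Zt_sum2 sum_ffunE.
apply: eq_bigr => c _; rewrite Zt_sum3 sum_ffunE //.
Qed.

Lemma Zt_low U X Y (k : 'I_N.+2) :
  (forall p u v w, (p <= N)%N -> AI p u v w = 0) -> (k <= N)%N -> Zt U X Y k = 0.
Proof.
move=> hA hk; rewrite Zt_expand big1 // => b _; rewrite big1 // => c _;
  rewrite big1 // => l _; rewrite Zt_dd_k; case: ifP => // h; apply: hA; lia.
Qed.

Lemma Zt_top U X Y :
  (forall p u v w, (p <= N)%N -> AI p u v w = 0) ->
  Zt U X Y ord_max = AI N.+1 (U ord0) (X ord0) (Y ord0).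
Proof.
move=> hA; rewrite Zt_expand.
transitivity (\sum_(b < N.+2) (if (b == 0 :> nat) then \sum_(c < N.+2) (if (c == 0 :> nat) then
   \sum_(l < N.+2) (if (l == 0 :> nat) then AI N.+1 (U b) (X c) (Y l) else 0) else 0) else 0)).
  apply: eq_bigr => b _; rewrite if_sum; apply: eq_bigr => c _; rewrite !if_sum;
  apply: eq_bigr => l _; rewrite Zt_dd_k /=.
  case: (eqVneq (b : nat) 0) => [Hb|Hb]; case: (eqVneq (c : nat) 0) => [Hc|Hc];
   case: (eqVneq (l : nat) 0) => [Hl|Hl] /=;
   (by rewrite Hb Hc Hl /= subn0) || (case: ifP => // h; apply: hA; move: (ordmaxval N.+1); lia).
have h1 : (0 < N.+2)%N by [].
by rewrite !sum_eqc h1 inord0'.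
Qed.

End MT.

Section FT.
Variables (N : nat) (V W : zmodType) (MR : nat -> V -> V -> V) (MS : nat -> W -> W -> W)
  (F : nat -> V -> W).
Hypothesis RDl : forall i x y z, MR i (x + y) z = MR i x z + MR i y z.
Hypothesis RDr : forall i x y z, MR i x (y + z) = MR i x y + MR i x z.
Hypothesis SDl : forall i x y z, MS i (x + y) z = MS i x z + MS i y z.
Hypothesis SDr : forall i x y z, MS i x (y + z) = MS i x y + MS i x z.
Hypothesis FD : forall i x y, F i (x + y) = F i x + F i y.

Lemma F0 i : F i 0 = 0. Proof. exact: (@addf0 _ _ (F i)). Qed.

Definition Ft (U : {ffun 'I_N.+2 -> V}) : {ffun 'I_N.+2 -> W} :=
  [ffun k : 'I_N.+2 => \sum_(i < N.+2) \sum_(j < N.+2)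
      (if (i + j == k)%N then F i (U j) else 0)].

Lemma Ft_D U1 U2 : Ft (U1 + U2) = Ft U1 + Ft U2.
Proof.
apply/ffunP => k; rewrite !ffunE -big_split; apply: eq_bigr => i _.
rewrite -big_split; apply: eq_bigr => j _.
by rewrite ffunE FD if_add.
Qed.
Lemma Ft_0 : Ft 0 = 0. Proof. exact: (@addf0 _ _ Ft Ft_D). Qed.
Lemma Ft_sum I r P (G : I -> {ffun 'I_N.+2 -> V}) :
  Ft (\sum_(i <- r | P i) G i) = \sum_(i <- r | P i) Ft (G i).
Proof. exact: (big_morph Ft Ft_D Ft_0). Qed.

Lemma Ft_d b u : Ft (dn N b u) = \sum_(a < N.+2) dn N (a + b) (F a u).
Proof.
apply/ffunP => k; rewrite ffunE sum_ffunE; apply: eq_bigr => i _.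
rewrite dnE.
transitivity (\sum_(j < N.+2) (if (j == b :> nat) then
   (if (i + b == k)%N then F i u else 0) else 0)).
  apply: eq_bigr => j _; rewrite !dnE.
  case: (eqVneq (j : nat) b) => [Hj|Hj];
    (try (rewrite Hj //)); rewrite ?F0 ?if_same //.
rewrite !sum_eqcc.
repeat (case: ifP => ?); try done; exfalso; move: (ltn_ord k); lia.
Qed.

Lemma Ft_at0 U : Ft U ord0 = F 0 (U ord0).
Proof.
rewrite ffunE.
transitivity (\sum_(i < N.+2) (if (i == 0 :> nat) then \sum_(j < N.+2) (if (j == 0 :> nat) then
   F i (U j) else 0) else 0)).
  apply: eq_bigr => i _; rewrite if_sum; apply: eq_bigr => j _.
  case: (eqVneq (i : nat) 0) => [Hi|Hi]; case: (eqVneq (j : nat) 0) => [Hj|Hj];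
   repeat (case: ifP => ?); try done; exfalso; move: (ord0val N.+1) (ordmaxval N.+1); lia.
have h1 : (0 < N.+2)%N by [].
by rewrite !sum_eqc h1 inord0'.
Qed.

Lemma Ft_top X : lowv X -> Ft X ord_max = F 0 (X ord_max).
Proof.
move=> hX; rewrite ffunE.
transitivity (\sum_(i < N.+2) (if (i == 0 :> nat) then \sum_(j < N.+2) (if (j == N.+1 :> nat) then
   F i (X j) else 0) else 0)).
  apply: eq_bigr => i _; rewrite if_sum; apply: eq_bigr => j _.
  have [ej|nj] := eqVneq (j : nat) N.+1.
    case: (eqVneq (i : nat) 0) => [Hi|Hi];
     repeat (case: ifP => ?); try done; exfalso; move: (ord0val N.+1) (ordmaxval N.+1); lia.
  rewrite hX ?F0 ?if_same //; move: (ltn_ord j) nj => ? /eqP ?; lia.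
have h1 : (0 < N.+2)%N by []. have h2 : (N.+1 < N.+2)%N by [].
by rewrite !sum_eqc h1 h2 inord0' inordmax.
Qed.

Definition Et (U X : {ffun 'I_N.+2 -> V}) : {ffun 'I_N.+2 -> W} := Ef (mt MR) (mt MS) Ft U X.

Lemma Et_D1 U1 U2 X : Et (U1 + U2) X = Et U1 X + Et U2 X.
Proof.
rewrite /Et /Ef; repeat (rewrite (mt_Dl RDl) || rewrite (mt_Dr RDr) || rewrite (mt_Dl SDl)
  || rewrite (mt_Dr SDr) || rewrite Ft_D); zsolve.
Qed.
Lemma Et_D2 U X1 X2 : Et U (X1 + X2) = Et U X1 + Et U X2.
Proof.
rewrite /Et /Ef; repeat (rewrite (mt_Dl RDl) || rewrite (mt_Dr RDr) || rewrite (mt_Dl SDl)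
  || rewrite (mt_Dr SDr) || rewrite Ft_D); zsolve.
Qed.
Lemma Et_sum1 I r P (G : I -> {ffun 'I_N.+2 -> V}) X :
  Et (\sum_(i <- r | P i) G i) X = \sum_(i <- r | P i) Et (G i) X.
Proof.
exact: (big_morph (fun U => Et U X) (fun a b => Et_D1 a b X)
   (@addf0 _ _ (fun U => Et U X) (fun a b => Et_D1 a b X))).
Qed.
Lemma Et_sum2 I r P (G : I -> {ffun 'I_N.+2 -> V}) U :
  Et U (\sum_(i <- r | P i) G i) = \sum_(i <- r | P i) Et U (G i).
Proof.
exact: (big_morph (fun X => Et U X) (fun a b => Et_D2 U a b)
   (@addf0 _ _ (fun X => Et U X) (fun a b => Et_D2 U a b))).
Qed.

Definition EI p u v :=
  \sum_(a < N.+2) \sum_(i < N.+2) (if (i + a == p)%N then F i (MR a u v) else 0)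
  - \sum_(a < N.+2) \sum_(c < N.+2) \sum_(i < N.+2)
      (if (i + a + c == p)%N then MS i (F a u) (F c v) else 0).

Lemma Et_dd_k b d u v (k : 'I_N.+2) :
  Et (dn N b u) (dn N d v) k = if (b + d <= k)%N then EI (k - (b + d))%N u v else 0.
Proof.
rewrite /Et /Ef !Ft_d (mt_dd N RDl RDr) Ft_sum (mt_suml SDl).
under eq_bigr => a _ do rewrite Ft_d.
under [X in _ - X]eq_bigr => a _ do rewrite (mt_sumr SDr).
under [X in _ - X]eq_bigr => a _ do under eq_bigr => c _ do rewrite (mt_dd N SDl SDr).
rewrite !ffB !sum_ffunE.
under eq_bigr => a _ do rewrite sum_ffunE.
under [X in _ - X]eq_bigr => a _ do rewrite sum_ffunE.
under [X in _ - X]eq_bigr => a _ do under eq_bigr => c _ do rewrite sum_ffunE.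
rewrite /EI; case: ifP => hs.
  congr (_ - _).
    apply: eq_bigr => a _; apply: eq_bigr => i _; rewrite !dnE.
    have e1 : (nat_of_ord k == (i + (a + b + d))%N) = (i + a == k - (b + d))%N.
      by apply/idP/idP => /eqP h; apply/eqP; lia.
    by rewrite e1.
  apply: eq_bigr => a _; apply: eq_bigr => c _; apply: eq_bigr => i _; rewrite !dnE.
  have e1 : (nat_of_ord k == (i + (a + b) + (c + d))%N) = (i + a + c == k - (b + d))%N.
    by apply/idP/idP => /eqP h; apply/eqP; lia.
  by rewrite e1.
rewrite !big1 ?subr0 // => a _; rewrite big1 // => i _; rewrite ?dnE;
  try (case: ifP => // /eqP h; exfalso; move/negP: hs; apply; lia).
rewrite big1 // => j _; rewrite dnE; case: ifP => // /eqP h; exfalso; move/negP: hs; apply; lia.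
Qed.

Lemma Et_expand U X k :
  Et U X k = \sum_(b < N.+2) \sum_(d < N.+2) Et (dn N b (U b)) (dn N d (X d)) k.
Proof.
rewrite {1}(decomp U) {1}(decomp X) Et_sum1 sum_ffunE.
apply: eq_bigr => b _; rewrite Et_sum2 sum_ffunE //.
Qed.

Lemma Et_low U X (k : 'I_N.+2) :
  (forall p u v, (p <= N)%N -> EI p u v = 0) -> (k <= N)%N -> Et U X k = 0.
Proof.
move=> hA hk; rewrite Et_expand big1 // => b _; rewrite big1 // => c _;
  rewrite Et_dd_k; case: ifP => // h; apply: hA; lia.
Qed.

Lemma Et_top U X :
  (forall p u v, (p <= N)%N -> EI p u v = 0) ->
  Et U X ord_max = EI N.+1 (U ord0) (X ord0).
Proof.
move=> hA; rewrite Et_expand.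
transitivity (\sum_(b < N.+2) (if (b == 0 :> nat) then \sum_(c < N.+2) (if (c == 0 :> nat) then
   EI N.+1 (U b) (X c) else 0) else 0)).
  apply: eq_bigr => b _; rewrite if_sum; apply: eq_bigr => c _; rewrite Et_dd_k /=.
  case: (eqVneq (b : nat) 0) => [Hb|Hb]; case: (eqVneq (c : nat) 0) => [Hc|Hc] /=;
   (by rewrite Hb Hc /= subn0) || (case: ifP => // h; apply: hA; move: (ordmaxval N.+1); lia).
have h1 : (0 < N.+2)%N by [].
by rewrite !sum_eqc h1 inord0'.
Qed.

End FT.

Section Lin.
Variable K : fieldType.

Lemma linD (U V : lmodType K) (g : U -> V) : lin g -> forall x y, g (x + y) = g x + g y.
Proof. by move=> h x y; rewrite -{1}[x]scale1r h scale1r. Qed.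
Lemma lin0 (U V : lmodType K) (g : U -> V) : lin g -> g 0 = 0.
Proof. by move=> h; apply: addf0; apply: linD. Qed.
Lemma linN (U V : lmodType K) (g : U -> V) : lin g -> forall x, g (- x) = - g x.
Proof. by move=> h; apply: add_neg; apply: linD. Qed.

Lemma lin_comp (U V X : lmodType K) (g : V -> X) (h : U -> V) :
  lin g -> lin h -> lin (fun x => g (h x)).
Proof. by move=> hg hh a u v; rewrite hh hg. Qed.
Lemma lin_sub (U V : lmodType K) (g h : U -> V) : lin g -> lin h -> lin (fun x => g x - h x).
Proof. by move=> hg hh a u v; rewrite hg hh scalerBr; zsolve. Qed.
Lemma lin_add (U V : lmodType K) (g h : U -> V) : lin g -> lin h -> lin (fun x => g x + h x).
Proof. by move=> hg hh a u v; rewrite hg hh scalerDr; zsolve. Qed.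
Lemma lin_opp (U V : lmodType K) (g : U -> V) : lin g -> lin (fun x => - g x).
Proof. by move=> hg a u v; rewrite hg scalerN; zsolve. Qed.
Lemma lin_sum (U V : lmodType K) n (G : 'I_n -> U -> V) :
  (forall i, lin (G i)) -> lin (fun x => \sum_(i < n) G i x).
Proof.
move=> hG a u v; rewrite scaler_sumr -big_split; apply: eq_bigr => i _; exact: hG.
Qed.
Lemma lin_zero (U V : lmodType K) : lin (fun _ : U => (0 : V)).
Proof. by move=> a u v; rewrite scaler0 addr0. Qed.
Lemma ml2_zero (U V : lmodType K) : ml2 (fun (_ _ : U) => (0 : V)).
Proof. by split => ?; apply: lin_zero. Qed.
End Lin.

Section Sums.
Variable K : fieldType.

Definition Zsum (T : zmodType) (M : nat -> T -> T -> T) n x y z :=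
  \sum_(i < n.+1) Zf (M i) (M (n - i)%N) x y z.

Definition eqR (T : zmodType) (M : nat -> T -> T -> T) n := forall x y z,
  \sum_(i < n.+1) M i (M (n - i)%N x y) z
  = \sum_(i < n.+1) (M i x (M (n - i)%N y z) + M i x (M (n - i)%N z y)).

Lemma eqR_Z (T : zmodType) (M : nat -> T -> T -> T) n :
  eqR M n <-> forall x y z, Zsum M n x y z = 0.
Proof.
have E : forall x y z, Zsum M n x y z = \sum_(i < n.+1) M i (M (n - i)%N x y) z
  - \sum_(i < n.+1) (M i x (M (n - i)%N y z) + M i x (M (n - i)%N z y)).
  move=> x y z; rewrite /Zsum -sumrB; apply: eq_bigr => i _; rewrite /Zf; zsolve.
split=> h x y z; first by rewrite E h subrr.
by apply/eqP; rewrite -subr_eq0 -E h.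
Qed.

Definition Esum (V W : zmodType) (MR : nat -> V -> V -> V) (MS : nat -> W -> W -> W)
  (F : nat -> V -> W) n x y :=
  \sum_(i < n.+1) F i (MR (n - i)%N x y)
  - \sum_(i < n.+1) \sum_(j < (n - i).+1) MS i (F j x) (F (n - i - j)%N y).

Definition eqF (V W : zmodType) (MR : nat -> V -> V -> V) (MS : nat -> W -> W -> W)
  (F : nat -> V -> W) n := forall x y,
  \sum_(i < n.+1) F i (MR (n - i)%N x y)
  = \sum_(i < n.+1) \sum_(j < (n - i).+1) MS i (F j x) (F (n - i - j)%N y).

Lemma eqF_E (V W : zmodType) MR MS (F : nat -> V -> W) n :
  eqF MR MS F n <-> forall x y, Esum MR MS F n x y = 0.
Proof.
split=> h x y; first by rewrite /Esum h subrr.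
by apply/eqP; rewrite -subr_eq0; apply/eqP; exact: h.
Qed.

Lemma AI_Zsum N (T : zmodType) (M : nat -> T -> T -> T) p u v w : (p < N.+2)%N ->
  AI N M p u v w = Zsum M p u v w.
Proof. by move=> hp; rewrite /AI /Zsum (conv2 (fun i a => Zf (M i) (M a) u v w)). Qed.

Lemma EI_Esum N (V W : zmodType) MR MS (F : nat -> V -> W) p u v : (p < N.+2)%N ->
  EI N MR MS F p u v = Esum MR MS F p u v.
Proof.
move=> hp; rewrite /EI /Esum (conv2 (fun i a => F i (MR a u v))) //.
by rewrite (conv3 (fun i a c => MS i (F a u) (F c v))).
Qed.

End Sums.

Lemma lowvD N (T : zmodType) (A B : {ffun 'I_N.+2 -> T}) : lowv A -> lowv B -> lowv (A + B).
Proof. by move=> ha hb k hk; rewrite ffD ha ?hb ?addr0. Qed.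
Lemma lowvB N (T : zmodType) (A B : {ffun 'I_N.+2 -> T}) : lowv A -> lowv B -> lowv (A - B).
Proof. by move=> ha hb k hk; rewrite ffB ha ?hb ?subr0. Qed.
Lemma lowvN N (T : zmodType) (A : {ffun 'I_N.+2 -> T}) : lowv A -> lowv (- A).
Proof. by move=> ha k hk; rewrite ffN ha ?oppr0. Qed.
Lemma dn0E N (T : zmodType) (x : T) : dn N 0 x ord0 = x.
Proof. by rewrite dnE. Qed.

Section Main.
Variable K : fieldType.

Lemma d3_ob (T : lmodType K) (M : nat -> T -> T -> T) N :
  (forall i, ml2 (M i)) -> (forall n, (n <= N)%N -> eqR M n) ->
  forall x y z w, d3 (M 0%N) (M 0%N) (M 0%N) (Zsum M N.+1) x y z w = 0.
Proof.
move=> hM heq x y z w.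
have hDl : forall i x y z, M i (x + y) z = M i x z + M i y z.
  by move=> i a b c; exact: (linD ((hM i).2 c) a b).
have hDr : forall i x y z, M i x (y + z) = M i x y + M i x z.
  by move=> i a b c; exact: (linD ((hM i).1 a) b c).
have hA : forall p u v w, (p <= N)%N -> AI N M p u v w = 0.
  by move=> p u v w' hp; rewrite AI_Zsum; [exact: ((eqR_Z M p).1 (heq p hp) u v w') | lia].
have lowZ : forall U X Y : {ffun 'I_N.+2 -> T}, lowv (Zt M U X Y).
  by move=> U X Y k hk; exact: (Zt_low hDl hDr U X Y hA hk).
have e := D3Z (mt_Dl hDl) (mt_Dr hDr) (dn N 0 x) (dn N 0 y) (dn N 0 z) (dn N 0 w).
move: (congr1 (fun X : {ffun 'I_N.+2 -> T} => X ord_max) e) => /=.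
rewrite [RHS]ffunE /D3f [Zf (mt M) (mt M)]lock ?(ffD, ffN).
rewrite (mt_top_r hDr); last first.
  rewrite -lock; apply: lowvD; [apply: lowvD; [apply: lowvD; [exact: lowZ| apply: lowvN; exact: lowZ]|exact: lowZ]| apply: lowvN; exact: lowZ].
rewrite (mt_top_l hDl); last by rewrite -lock; exact: lowZ.
rewrite ?(ffD, ffN) -lock !(Zt_top hDl hDr _ _ _ hA) ?(ffD, ffN) !(mt_at0 M) !dn0E.
rewrite !AI_Zsum //.
Qed.

End Main.

Section Mixed.
Variable K : fieldType.

Lemma mixed_ob (R S : lmodType K) (MR : nat -> R -> R -> R) (MS : nat -> S -> S -> S)
  (F : nat -> R -> S) N mR mS f :
  MR 0%N = mR -> MS 0%N = mS -> F 0%N = f ->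
  (forall i, ml2 (MR i) /\ ml2 (MS i) /\ lin (F i)) ->
  (forall n, (n <= N)%N -> eqR MR n /\ eqR MS n /\ eqF MR MS F n) ->
  forall x y z, f (Zsum MR N.+1 x y z) - Zsum MS N.+1 (f x) (f y) (f z)
    - d2 mR (lf mS f) (rf mS f) (fun a b => - Esum MR MS F N.+1 a b) x y z = 0.
Proof.
move=> h0R h0S h0F hM heq x y z.
have RDl : forall i x y z, MR i (x + y) z = MR i x z + MR i y z.
  by move=> i a b c; exact: (linD ((hM i).1.2 c) a b).
have RDr : forall i x y z, MR i x (y + z) = MR i x y + MR i x z.
  by move=> i a b c; exact: (linD ((hM i).1.1 a) b c).
have SDl : forall i x y z, MS i (x + y) z = MS i x z + MS i y z.
  by move=> i a b c; exact: (linD ((hM i).2.1.2 c) a b).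
have SDr : forall i x y z, MS i x (y + z) = MS i x y + MS i x z.
  by move=> i a b c; exact: (linD ((hM i).2.1.1 a) b c).
have FD : forall i x y, F i (x + y) = F i x + F i y.
  by move=> i a b; exact: (linD (hM i).2.2 a b).
have hAR : forall p u v w, (p <= N)%N -> AI N MR p u v w = 0.
  move=> p u v w hp; rewrite AI_Zsum; last by lia.
  exact: ((eqR_Z MR p).1 (heq p hp).1 u v w).
have hAS : forall p u v w, (p <= N)%N -> AI N MS p u v w = 0.
  move=> p u v w hp; rewrite AI_Zsum; last by lia.
  exact: ((eqR_Z MS p).1 (heq p hp).2.1 u v w).
have hE : forall p u v, (p <= N)%N -> EI N MR MS F p u v = 0.
  move=> p u v hp; rewrite EI_Esum; last by lia.
  exact: ((eqF_E MR MS F p).1 (heq p hp).2.2 u v).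
have lowZR : forall U X Y : {ffun 'I_N.+2 -> R}, lowv (Zt MR U X Y).
  by move=> U X Y k hk; exact: (Zt_low RDl RDr U X Y hAR hk).
have lowE : forall U X : {ffun 'I_N.+2 -> R}, lowv (Et MR MS F U X).
  by move=> U X k hk; exact: (Et_low RDl RDr SDl SDr FD U X hE hk).
have e := D2E (mt_Dr RDr) (mt_Dl SDl) (mt_Dr SDr) (Ft_D FD) (dn N 0 x) (dn N 0 y) (dn N 0 z).
move: (congr1 (fun X : {ffun 'I_N.+2 -> S} => X ord_max) e) => /=.
rewrite [RHS]ffunE /D2f [Zf (mt MR) (mt MR)]lock [Zf (mt MS) (mt MS)]lock.
rewrite [Ef (mt MR) (mt MS) (Ft F)]lock ?(ffD, ffN).
rewrite (Ft_top FD); last by rewrite -lock; exact: lowZR.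
rewrite (mt_top_r SDr); last by rewrite -lock; apply: lowvD; exact: lowE.
rewrite (mt_top_l SDl); last by rewrite -lock; exact: lowE.
rewrite ?(ffD, ffN) -!lock.
rewrite (Zt_top RDl RDr _ _ _ hAR) (Zt_top SDl SDr _ _ _ hAS).
rewrite !(Et_top RDl RDr SDl SDr FD _ _ hE) ?(ffD, ffN) !(mt_at0 MR) !(Ft_at0 F) !dn0E.
rewrite !AI_Zsum // !EI_Esum // h0R h0S h0F => {}e.
apply/eqP; rewrite -subr_eq0 -[X in _ - X]e; apply/eqP.
rewrite /d2 /lf /rf.
have SNr : forall i a b, MS i a (- b) = - MS i a b.
  by move=> i a; apply: add_neg; exact: SDr.
have SNl : forall i a b, MS i (- a) b = - MS i a b.
  by move=> i a b; apply: (@add_neg _ _ (fun a => MS i a b)) => u v; exact: SDl.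
rewrite -h0S; repeat (rewrite SDr || rewrite SDl || rewrite SNr || rewrite SNl).
zsolve0.
Qed.
End Mixed.

Lemma sum_peel (T : zmodType) N (G G' : nat -> T) :
  (forall i, (0 < i)%N -> (i <= N)%N -> G' i = G i) ->
  \sum_(i < N.+2) G' i = \sum_(i < N.+2) G i + (G' 0%N - G 0%N) + (G' N.+1 - G N.+1).
Proof.
move=> h.
rewrite -!(big_mkord xpredT) (big_nat_recl N.+1 0 G') // (big_nat_recl N.+1 0 G) //.
rewrite (big_nat_recr N 0 (fun i => G' i.+1)) // (big_nat_recr N 0 (fun i => G i.+1)) //=.
rewrite (eq_big_nat _ _ (F1 := fun i => G' i.+1) (F2 := fun i => G i.+1)); last first.
  by move=> i /andP[_ hi]; apply: h.
zsolve.
Qed.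

Definition upd (A : Type) N (G : nat -> A) (g : A) := fun i => if (i == N.+1)%N then g else G i.

Section Upd.
Variable K : fieldType.

Lemma ml3_Zsum (T : lmodType K) (M : nat -> T -> T -> T) n :
  (forall i, ml2 (M i)) -> ml3 (Zsum M n).
Proof.
move=> hM; split; [|split].
- move=> y z; apply: lin_sum => i; rewrite /Zf; apply: lin_sub; [apply: lin_sub|].
  + exact: (lin_comp ((hM i).2 z) ((hM _).2 y)).
  + exact: (hM i).2.
  + exact: (hM i).2.
- move=> x z; apply: lin_sum => i; rewrite /Zf; apply: lin_sub; [apply: lin_sub|].
  + exact: (lin_comp ((hM i).2 z) ((hM _).1 x)).
  + exact: (lin_comp ((hM i).1 x) ((hM _).2 z)).
  + exact: (lin_comp ((hM i).1 x) ((hM _).1 z)).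
- move=> x y; rewrite /Zsum; apply: lin_sum => i; rewrite /Zf; apply: lin_sub; [apply: lin_sub|].
  + exact: (hM i).1.
  + exact: (lin_comp ((hM i).1 x) ((hM _).1 y)).
  + exact: (lin_comp ((hM i).1 x) ((hM _).2 y)).
Qed.

Lemma ml2_ObF (R S : lmodType K) (MR : nat -> R -> R -> R) (MS : nat -> S -> S -> S)
  (F : nat -> R -> S) n :
  (forall i, ml2 (MR i) /\ ml2 (MS i) /\ lin (F i)) ->
  ml2 (fun a b => - Esum MR MS F n a b).
Proof.
move=> hM; split.
- move=> x; apply: lin_opp; rewrite /Esum; apply: lin_sub.
  + apply: lin_sum => i; exact: (lin_comp (hM i).2.2 ((hM _).1.1 x)).
  + apply: lin_sum => i; apply: lin_sum => j.
    exact: (lin_comp ((hM i).2.1.1 (F j x)) (hM _).2.2).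
- move=> y; apply: lin_opp; rewrite /Esum; apply: lin_sub.
  + apply: lin_sum => i; exact: (lin_comp (hM i).2.2 ((hM _).1.2 y)).
  + apply: lin_sum => i; apply: lin_sum => j.
    exact: (lin_comp ((hM i).2.1.2 _) (hM _).2.2).
Qed.

End Upd.

Section Upd2.
Variable K : fieldType.

Lemma Zsum_upd (T : lmodType K) (M : nat -> T -> T -> T) N xi x y z :
  ml2 (M 0%N) -> ml2 xi -> (forall a b, M N.+1 a b = 0) ->
  Zsum (upd N M xi) N.+1 x y z = Zsum M N.+1 x y z - d2 (M 0%N) (M 0%N) (M 0%N) xi x y z.
Proof.
move=> h0 hxi hv; rewrite /Zsum.
rewrite (@sum_peel _ N (fun i => Zf (M i) (M (N.+1 - i)%N) x y z)
   (fun i => Zf (upd N M xi i) (upd N M xi (N.+1 - i)%N) x y z)); last first.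
  move=> i h1 h2; rewrite /upd; have -> : (i == N.+1) = false by apply/eqP; lia.
  by have -> : (N.+1 - i == N.+1)%N = false by apply/eqP; lia.
rewrite /upd /= subn0 subnn eqxx /= /Zf !hv /d2.
rewrite (lin0 (h0.1 _)) (lin0 (h0.2 _)).
have D0 := linD (h0.1 _); have DX := linD (hxi.1 _).
rewrite !D0 !DX; zsolve.
Qed.

Lemma Esum_upd (R S : lmodType K) (MR : nat -> R -> R -> R) (MS : nat -> S -> S -> S)
  (F : nat -> R -> S) N xi pi phi x y :
  (forall i, ml2 (MR i) /\ ml2 (MS i) /\ lin (F i)) ->
  (forall a b, MR N.+1 a b = 0) -> (forall a b, MS N.+1 a b = 0) -> (forall a, F N.+1 a = 0) ->
  Esum (upd N MR xi) (upd N MS pi) (upd N F phi) N.+1 x y =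
  Esum MR MS F N.+1 x y + (F 0%N (xi x y) - pi (F 0%N x) (F 0%N y)
     - d1 (MR 0%N) (lf (MS 0%N) (F 0%N)) (rf (MS 0%N) (F 0%N)) phi x y).
Proof.
move=> hM hR hS hF; rewrite /Esum.
rewrite (@sum_peel _ N (fun i => F i (MR (N.+1 - i)%N x y))
   (fun i => upd N F phi i (upd N MR xi (N.+1 - i)%N x y))); last first.
  move=> i h1 h2; rewrite /upd; have -> : (i == N.+1) = false by apply/eqP; lia.
  by have -> : (N.+1 - i == N.+1)%N = false by apply/eqP; lia.
rewrite (@sum_peel _ N (fun i => \sum_(j < (N.+1 - i).+1) MS i (F j x) (F (N.+1 - i - j)%N y))
   (fun i => \sum_(j < (N.+1 - i).+1) upd N MS pi i (upd N F phi j x)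
       (upd N F phi (N.+1 - i - j)%N y))); last first.
  move=> i h1 h2; apply: eq_bigr => j _; rewrite /upd.
  have -> : (i == N.+1) = false by apply/eqP; lia.
  have -> : (nat_of_ord j == N.+1) = false by apply/eqP; move: (ltn_ord j); lia.
  by have -> : (N.+1 - i - j == N.+1)%N = false by apply/eqP; lia.
rewrite /= !subn0 subnn.
rewrite (@sum_peel _ N (fun j => MS 0%N (F j x) (F (N.+1 - j)%N y))
   (fun j => upd N MS pi 0 (upd N F phi j x) (upd N F phi (N.+1 - j)%N y))); last first.
  move=> j h1 h2; rewrite /upd.
  have -> : (j == N.+1) = false by apply/eqP; lia.
  by have -> : (N.+1 - j == N.+1)%N = false by apply/eqP; lia.
rewrite !big_ord1 /upd /= !subn0 !subnn eqxx /=.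
rewrite !hR !hS !hF (lin0 (hM 0%N).2.2) (lin0 ((hM 0%N).2.1.1 _)) (lin0 ((hM 0%N).2.1.2 _)).
rewrite /d1 /lf /rf; zsolve.
Qed.

Lemma eqR_ext (T : zmodType) (M M' : nat -> T -> T -> T) n :
  (forall i, (i <= n)%N -> M' i = M i) -> eqR M n -> eqR M' n.
Proof.
move=> hi h x y z.
have e1 : forall i : 'I_n.+1, M' i = M i by move=> i; apply: hi; move: (ltn_ord i); lia.
have e2 : forall i : 'I_n.+1, M' (n - i)%N = M (n - i)%N by move=> i; apply: hi; lia.
under eq_bigr => i _ do rewrite e2 e1.
under [RHS]eq_bigr => i _ do rewrite e2 e1.
exact: h.
Qed.

Lemma eqF_ext (V W : zmodType) MR MR' MS MS' (F F' : nat -> V -> W) n :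
  (forall i, (i <= n)%N -> MR' i = MR i) -> (forall i, (i <= n)%N -> MS' i = MS i) ->
  (forall i, (i <= n)%N -> F' i = F i) -> eqF MR MS F n -> eqF MR' MS' F' n.
Proof.
move=> hR hS hF h x y.
have e1 : forall i : 'I_n.+1, F' i (MR' (n - i)%N x y) = F i (MR (n - i)%N x y).
  by move=> i; rewrite hF ?hR //; move: (ltn_ord i); lia.
under eq_bigr => i _ do rewrite e1.
rewrite h; apply: eq_bigr => i _; apply: eq_bigr => j _.
rewrite hS ?hF //; move: (ltn_ord i) (ltn_ord j); lia.
Qed.

End Upd2.

Section Final.
Variables (K : fieldType) (R S : lmodType K) (mR : R -> R -> R) (mS : S -> S -> S) (f : R -> S).

Definition good N (MR : nat -> R -> R -> R) (MS : nat -> S -> S -> S) (F : nat -> R -> S) :=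
  MR 0%N = mR /\ MS 0%N = mS /\ F 0%N = f /\
  (forall i, ml2 (MR i) /\ ml2 (MS i) /\ lin (F i)) /\
  (forall i, (N < i)%N -> (forall x y, MR i x y = 0) /\ (forall x y, MS i x y = 0)
                         /\ (forall x, F i x = 0)) /\
  (forall n, (n <= N)%N -> eqR MR n /\ eqR MS n /\ eqF MR MS F n).

Definition solZ N (MR : nat -> R -> R -> R) (MS : nat -> S -> S -> S) (F : nat -> R -> S)
  (p : (R -> R -> R) * (S -> S -> S) * (R -> S)) :=
  ml2 p.1.1 /\ ml2 p.1.2 /\ lin p.2 /\
  (forall x y z, d2 mR mR mR p.1.1 x y z = Zsum MR N.+1 x y z) /\
  (forall x y z, d2 mS mS mS p.1.2 x y z = Zsum MS N.+1 x y z) /\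
  (forall x y, f (p.1.1 x y) - p.1.2 (f x) (f y) - d1 mR (lf mS f) (rf mS f) p.2 x y
     = - Esum MR MS F N.+1 x y).

Lemma update N MR MS F p : good N MR MS F -> solZ N MR MS F p ->
  good N.+1 (upd N MR p.1.1) (upd N MS p.1.2) (upd N F p.2).
Proof.
case=> h0R [h0S [h0F [hM [hv heq]]]] [hxi [hpi [hphi [e1 [e2 e3]]]]].
have [hvR [hvS hvF]] := hv N.+1 (ltnSn N).
split; first by rewrite /upd /=.
split; first by rewrite /upd /=.
split; first by rewrite /upd /=.
split.
  by move=> i; rewrite /upd; case: (i == N.+1) => //; exact: hM.
split.
  move=> i hi; rewrite /upd; have -> : (i == N.+1) = false by apply/eqP; lia.
  by apply: hv; lia.
move=> n hn; case: (ltnP n N.+1) => hnN.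
  have hagR : forall i, (i <= n)%N -> upd N MR p.1.1 i = MR i.
    by move=> i hi; rewrite /upd; have -> : (i == N.+1) = false by apply/eqP; lia.
  have hagS : forall i, (i <= n)%N -> upd N MS p.1.2 i = MS i.
    by move=> i hi; rewrite /upd; have -> : (i == N.+1) = false by apply/eqP; lia.
  have hagF : forall i, (i <= n)%N -> upd N F p.2 i = F i.
    by move=> i hi; rewrite /upd; have -> : (i == N.+1) = false by apply/eqP; lia.
  have [h1 [h2 h3]] := heq n (ltnSE hnN).
  split; first exact: eqR_ext hagR h1.
  split; first exact: eqR_ext hagS h2.
  exact: eqF_ext hagR hagS hagF h3.
have -> : n = N.+1 by lia.
split.
  apply/(eqR_Z _ _).2 => x y z; rewrite Zsum_upd //; last by exact: (hM 0%N).1.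
  by rewrite h0R e1 subrr.
split.
  apply/(eqR_Z _ _).2 => x y z; rewrite Zsum_upd //; last by exact: (hM 0%N).2.1.
  by rewrite h0S e2 subrr.
apply/(eqF_E _ _ _ _).2 => x y; by rewrite Esum_upd // h0R h0S h0F e3 subrr.
Qed.

End Final.

Section Build.
Variables (K : fieldType) (R S : lmodType K) (mR : R -> R -> R) (mS : S -> S -> S) (f : R -> S).
Hypotheses (hzR : zinbiel mR) (hzS : zinbiel mS) (hf : zinb_morph mR mS f)
  (H3 : H3_zero mR mS f).
Variables (m1R : R -> R -> R) (m1S : S -> S -> S) (f1 : R -> S).
Hypothesis hc : cocycle2 mR mS f m1R m1S f1.

Definition b0R : nat -> R -> R -> R := fun i => if i == 0%N then mR else fun _ _ => 0.
Definition b0S : nat -> S -> S -> S := fun i => if i == 0%N then mS else fun _ _ => 0.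
Definition b0F : nat -> R -> S := fun i => if i == 0%N then f else fun _ => 0.

Lemma base_good : good mR mS f 0 b0R b0S b0F.
Proof.
split; first by [].
split; first by [].
split; first by [].
split.
  move=> i; rewrite /b0R /b0S /b0F; case: (i == 0%N).
    by split; [exact: (proj1 hzR) | split; [exact: (proj1 hzS) | exact: (proj1 hf)]].
  by split; [exact: ml2_zero | split; [exact: ml2_zero | exact: lin_zero]].
split.
  by move=> i hi; rewrite /b0R /b0S /b0F; have -> : (i == 0%N) = false by apply/eqP; lia.
move=> n; rewrite leqn0 => /eqP ->.
split; first by move=> x y z; rewrite !big_ord1 /= sub0n; exact: (proj2 hzR).
split; first by move=> x y z; rewrite !big_ord1 /= sub0n; exact: (proj2 hzS).
by move=> x y; rewrite !big_ord1 /= !sub0n; exact: (proj2 hf).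
Qed.

Lemma base_sol : solZ mR mS f 0 b0R b0S b0F (m1R, m1S, f1).
Proof.
case: hc => h1 [h2 [h3 [h4 [h5 h6]]]].
have mR0 : forall a, mR a 0 = 0 by move=> a; exact: lin0 ((proj1 hzR).1 a).
have mR0' : forall a, mR 0 a = 0 by move=> a; exact: lin0 ((proj1 hzR).2 a).
have mS0 : forall a, mS a 0 = 0 by move=> a; exact: lin0 ((proj1 hzS).1 a).
have mS0' : forall a, mS 0 a = 0 by move=> a; exact: lin0 ((proj1 hzS).2 a).
have f0 : f 0 = 0 by exact: lin0 (proj1 hf).
split; first exact: h1.
split; first exact: h2.
split; first exact: h3.
split.
  move=> x y z; rewrite h4 /Zsum !big_ord_recl big_ord0 /= /Zf /b0R /=.
  by rewrite mR0 mR0'; zsolve.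
split.
  move=> x y z; rewrite h5 /Zsum !big_ord_recl big_ord0 /= /Zf /b0S /=.
  by rewrite mS0 mS0'; zsolve.
move=> x y /=; rewrite h6 /Esum !big_ord_recl !big_ord0 /= /b0R /b0S /b0F /=.
by rewrite f0 mS0 mS0'; zsolve.
Qed.

Definition TR := ((nat -> R -> R -> R) * (nat -> S -> S -> S) * (nat -> R -> S))%type.
Definition PT := ((R -> R -> R) * (S -> S -> S) * (R -> S))%type.
Definition updT N (t : TR) (p : PT) : TR := (upd N t.1.1 p.1.1, upd N t.1.2 p.1.2, upd N t.2 p.2).
Definition chooseT N (t : TR) : PT :=
  epsilon (inhabits ((fun _ _ => 0), (fun _ _ => 0), (fun _ => 0)))
    (solZ mR mS f N t.1.1 t.1.2 t.2).

Fixpoint build n : TR :=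
  match n with
  | 0 => updT 0 (b0R, b0S, b0F) (m1R, m1S, f1)
  | k.+1 => updT k.+1 (build k) (chooseT k.+1 (build k))
  end.

Lemma build_good n : good mR mS f n.+1 (build n).1.1 (build n).1.2 (build n).2.
Proof.
elim: n => [|n IH].
  exact: (update base_good base_sol).
apply: update => //.
apply: epsilon_spec.
case: IH => h0R [h0S [h0F [hM [hv heq]]]].
have hMR : forall i, ml2 ((build n).1.1 i) by move=> i; exact: (hM i).1.
have hMS : forall i, ml2 ((build n).1.2 i) by move=> i; exact: (hM i).2.1.
have eR : forall k, (k <= n.+1)%N -> eqR (build n).1.1 k by move=> k hk; exact: (heq k hk).1.
have eS : forall k, (k <= n.+1)%N -> eqR (build n).1.2 k by move=> k hk; exact: (heq k hk).2.1.
have d3R := d3_ob hMR eR; rewrite h0R in d3R.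
have d3S := d3_ob hMS eS; rewrite h0S in d3S.
have mix := mixed_ob h0R h0S h0F hM heq.
have [xi2 [pi2 [phi1 [g1 [g2 [g3 [g4 [g5 g6]]]]]]]] :=
  H3 (ml3_Zsum n.+2 hMR) (ml3_Zsum n.+2 hMS) (ml2_ObF n.+2 hM) d3R d3S mix.
by exists (xi2, pi2, phi1).
Qed.

Lemma build_step m i : (i <= m.+1)%N ->
  (build m.+1).1.1 i = (build m).1.1 i /\ (build m.+1).1.2 i = (build m).1.2 i /\
  (build m.+1).2 i = (build m).2 i.
Proof.
by move=> hi /=; rewrite /updT /upd /=; have -> : (i == m.+2) = false by apply/eqP; lia.
Qed.

Lemma build_agree n m : (n <= m)%N -> forall i, (i <= n.+1)%N ->
  (build m).1.1 i = (build n).1.1 i /\ (build m).1.2 i = (build n).1.2 i /\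
  (build m).2 i = (build n).2 i.
Proof.
elim: m => [|m IH] hnm i hi.
  by have -> : n = 0%N by lia.
case: (eqVneq n m.+1) => [->|hne]; first by [].
have hnm' : (n <= m)%N by move/eqP: hne; lia.
have [a [b c]] := IH hnm' i hi.
have [a' [b' c']] := @build_step m i ltac:(lia).
by rewrite a' b' c'.
Qed.

Theorem main_thm : exists (MR : nat -> R -> R -> R) (MS : nat -> S -> S -> S) (F : nat -> R -> S),
  deformation mR mS f MR MS F /\ MR 1%N = m1R /\ MS 1%N = m1S /\ F 1%N = f1.
Proof.
exists (fun i => (build i).1.1 i), (fun i => (build i).1.2 i), (fun i => (build i).2 i).
have ag : forall i n, (i <= n)%N ->
  (build n).1.1 i = (build i).1.1 i /\ (build n).1.2 i = (build i).1.2 i /\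
  (build n).2 i = (build i).2 i.
  by move=> i n h; apply: build_agree => //.
have G := build_good.
split; last by [].
split; first exact: (G 0%N).1.
split; first exact: (G 0%N).2.1.
split; first exact: (G 0%N).2.2.1.
split; first by move=> i; exact: ((G i).2.2.2.1 i).
split.
  move=> n; change (eqR (fun i => (build i).1.1 i) n); apply: (@eqR_ext _ (build n).1.1).
    by move=> i hi; rewrite (ag i n hi).1.
  exact: ((G n).2.2.2.2.2 n (leqnSn n)).1.
split.
  move=> n; change (eqR (fun i => (build i).1.2 i) n); apply: (@eqR_ext _ (build n).1.2).
    by move=> i hi; rewrite (ag i n hi).2.1.
  exact: ((G n).2.2.2.2.2 n (leqnSn n)).2.1.
move=> n; change (eqF (fun i => (build i).1.1 i) (fun i => (build i).1.2 i) (fun i => (build i).2 i) n).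
apply: (@eqF_ext _ _ (build n).1.1 _ (build n).1.2 _ (build n).2).
- by move=> i hi; rewrite (ag i n hi).1.
- by move=> i hi; rewrite (ag i n hi).2.1.
- by move=> i hi; rewrite (ag i n hi).2.2.
exact: ((G n).2.2.2.2.2 n (leqnSn n)).2.2.
Qed.

End Build.

Theorem corollary5p3 (K : fieldType) (R S : lmodType K)
  (mR : R -> R -> R) (mS : S -> S -> S) (f : R -> S) :
  zinbiel mR -> zinbiel mS -> zinb_morph mR mS f ->
  H3_zero mR mS f ->
  forall (m1R : R -> R -> R) (m1S : S -> S -> S) (f1 : R -> S),
    cocycle2 mR mS f m1R m1S f1 ->
    exists (MR : nat -> R -> R -> R) (MS : nat -> S -> S -> S) (F : nat -> R -> S),
      deformation mR mS f MR MS F /\ MR 1%N = m1R /\ MS 1%N = m1S /\ F 1%N = f1.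
Proof.
move=> hzR hzS hf H3 m1R m1S f1 hc.
exact: (main_thm hzR hzS hf H3 hc).
Qed.
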